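(* Let $n\ge 2$ and let $G$ be a subgroup of $\mathrm{Sp}(n,1)$ containing $I_{n-2}\oplus c_1$, $I_{n-2}\oplus c_2$ and $I_{n-2}\oplus c_3$, where $c_1=\mathrm{diag}(1,i,-i)$, $c_2=\mathrm{diag}(i,1,-i)$, $c_3=\mathrm{diag}(i,-i,1)$. Then for every $g\in\mathrm{Sp}(n,1)$, the set of traces of the elements of $gGg^{-1}$ is not contained in $\mathbb R$.
   Context: $\mathbb H$ denotes the quaternions, with units $i,j,k$. $\mathrm{Sp}(n,1)=\{A\in\mathrm{GL}(n+1,\mathbb H): A^*I_{n,1}A=I_{n,1}\}$ with $A^*$ the conjugate transpose and $I_{n,1}=\mathrm{diag}(1,\dots,1,-1)$. $I_{n-2}\oplus c$ denotes the block diagonal matrix with the $(n-2)\times(n-2)$ identity in the upper left block and the $3\times 3$ matrix $c$ in the lower right block. The trace of a quaternionic matrix is the sum of its diagonal entries. *)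

(* Defs.v *)
From HB Require Import structures.
From mathcomp Require Import all_boot all_order all_algebra.
From mathcomp Require Import ring.
From mathcomp Require Import reals.
Set Implicit Arguments. Unset Strict Implicit. Unset Printing Implicit Defensive.
Import Order.TTheory GRing.Theory Num.Theory.
Local Open Scope ring_scope.

Section Quaternions.
Variable R : realFieldType.

Record quat := Quat { q0 : R; q1 : R; q2 : R; q3 : R }.

Definition quat_to_seq (x : quat) := [:: q0 x; q1 x; q2 x; q3 x].
Definition seq_to_quat (s : seq R) :=
  if s is [:: a; b; c; d] then Some (Quat a b c d) else None.
Lemma quat_to_seqK : pcancel quat_to_seq seq_to_quat. Proof. by case. Qed.

HB.instance Definition _ := Equality.copy quat (pcan_type quat_to_seqK).
HB.instance Definition _ := Choice.copy quat (pcan_type quat_to_seqK).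

Definition qadd (x y : quat) :=
  Quat (q0 x + q0 y) (q1 x + q1 y) (q2 x + q2 y) (q3 x + q3 y).
Definition qopp (x : quat) := Quat (- q0 x) (- q1 x) (- q2 x) (- q3 x).
Definition qzero := Quat 0 0 0 0.

Lemma qaddA : associative qadd.
Proof. by move=> [a b c d] [e f g h] [i j k l]; rewrite /qadd /=; congr Quat; ring. Qed.
Lemma qaddC : commutative qadd.
Proof. by move=> [a b c d] [e f g h]; rewrite /qadd /=; congr Quat; ring. Qed.
Lemma qadd0 : left_id qzero qadd.
Proof. by move=> [a b c d]; rewrite /qadd /=; congr Quat; ring. Qed.
Lemma qaddN : left_inverse qzero qopp qadd.
Proof. by move=> [a b c d]; rewrite /qadd /=; congr Quat; ring. Qed.

HB.instance Definition _ := GRing.isZmodule.Build quat qaddA qaddC qadd0 qaddN.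

(* Hamilton product, i^2 = j^2 = k^2 = ijk = -1 *)
Definition qmul (x y : quat) :=
  let: Quat a1 b1 c1 d1 := x in let: Quat a2 b2 c2 d2 := y in
  Quat (a1 * a2 - b1 * b2 - c1 * c2 - d1 * d2)
       (a1 * b2 + b1 * a2 + c1 * d2 - d1 * c2)
       (a1 * c2 - b1 * d2 + c1 * a2 + d1 * b2)
       (a1 * d2 + b1 * c2 - c1 * b2 + d1 * a2).
Definition qone := Quat 1 0 0 0.

Lemma qmulA : associative qmul.
Proof. by move=> [a b c d] [e f g h] [i j k l] /=; congr Quat; ring. Qed.
Lemma qmul1 : left_id qone qmul.
Proof. by move=> [a b c d] /=; congr Quat; ring. Qed.
Lemma qmulr1 : right_id qone qmul.
Proof. by move=> [a b c d] /=; congr Quat; ring. Qed.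
Lemma qmulDl : left_distributive qmul qadd.
Proof. by move=> [a b c d] [e f g h] [i j k l] /=; rewrite /qadd /=; congr Quat; ring. Qed.
Lemma qmulDr : right_distributive qmul qadd.
Proof. by move=> [a b c d] [e f g h] [i j k l] /=; rewrite /qadd /=; congr Quat; ring. Qed.
Lemma qone_neq0 : qone != 0.
Proof. by apply/eqP => -[] /eqP; rewrite oner_eq0. Qed.

HB.instance Definition _ :=
  GRing.Zmodule_isNzRing.Build quat qmulA qmul1 qmulr1 qmulDl qmulDr qone_neq0.

Definition qi : quat := Quat 0 1 0 0.
Definition qj : quat := Quat 0 0 1 0.
Definition qk : quat := Quat 0 0 0 1.
Definition qofR (r : R) : quat := Quat r 0 0 0.

Definition qconj (x : quat) : quat := Quat (q0 x) (- q1 x) (- q2 x) (- q3 x).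

End Quaternions.

Definition qadj (R : realFieldType) (m n : nat) (A : 'M[quat R]_(m, n))
  : 'M[quat R]_(n, m) := (map_mx (@qconj R) A)^T.

Definition Inm1 (R : realFieldType) (n : nat) : 'M[quat R]_(n.+1) :=
  \matrix_(i, j) (if i == j then (if i == ord_max then -1 else 1) else 0).

Definition Sp_n1 (R : realFieldType) (n : nat) (A : 'M[quat R]_(n.+1)) : Prop :=
  qadj A *m Inm1 R n *m A = Inm1 R n.

(** I_{n-2} (+) c for a 3x3 matrix c, an (n+1)x(n+1) matrix (meaningful for n >= 2) *)
Definition blk3 (R : realFieldType) (n : nat) (c : 'M[quat R]_3) : 'M[quat R]_(n.+1) :=
  \matrix_(i, j)
    (if ((i < n - 2)%N || (j < n - 2)%N) then (i == j)%:R
     else c (inord (i - (n - 2))) (inord (j - (n - 2)))).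

Definition diag3 (R : realFieldType) (a b c : quat R) : 'M[quat R]_3 :=
  \matrix_(i, j) (if i == j then [:: a; b; c]`_i else 0).

Definition c1 (R : realFieldType) := diag3 1 (qi R) (- qi R).
Definition c2 (R : realFieldType) := diag3 (qi R) 1 (- qi R).
Definition c3 (R : realFieldType) := diag3 (qi R) (- qi R) 1.

(* Main.v *)
Require Import Defs.
From HB Require Import structures.
From mathcomp Require Import all_boot all_order all_algebra.
From mathcomp Require Import ring lra zify.
From mathcomp Require Import reals.
Import Order.TTheory GRing.Theory Num.Theory.
Local Open Scope ring_scope.

Section Helpers.
Variable R : realType.
Notation Q := (quat R).

Lemma qext (x y : Q) : q0 x = q0 y -> q1 x = q1 y -> q2 x = q2 y -> q3 x = q3 y -> x = y.
Proof. by case: x => a b c d; case: y => e f g h /= -> -> -> ->. Qed.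

Lemma q0_sum (I : Type) (r : seq I) (P : pred I) (F : I -> Q) :
  q0 (\sum_(i <- r | P i) F i) = \sum_(i <- r | P i) q0 (F i).
Proof. by elim/big_rec2: _ => //= i y1 y2 _ ->. Qed.
Lemma q1_sum (I : Type) (r : seq I) (P : pred I) (F : I -> Q) :
  q1 (\sum_(i <- r | P i) F i) = \sum_(i <- r | P i) q1 (F i).
Proof. by elim/big_rec2: _ => //= i y1 y2 _ ->. Qed.
Lemma q2_sum (I : Type) (r : seq I) (P : pred I) (F : I -> Q) :
  q2 (\sum_(i <- r | P i) F i) = \sum_(i <- r | P i) q2 (F i).
Proof. by elim/big_rec2: _ => //= i y1 y2 _ ->. Qed.
Lemma q3_sum (I : Type) (r : seq I) (P : pred I) (F : I -> Q) :
  q3 (\sum_(i <- r | P i) F i) = \sum_(i <- r | P i) q3 (F i).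
Proof. by elim/big_rec2: _ => //= i y1 y2 _ ->. Qed.

Definition Nq (x : Q) := q0 x ^+ 2 + q1 x ^+ 2 + q2 x ^+ 2 + q3 x ^+ 2.
Definition u1 (x : Q) := q1 (x * qi R * qconj x).
Definition u2 (x : Q) := q2 (x * qi R * qconj x).
Definition u3 (x : Q) := q3 (x * qi R * qconj x).

Lemma Nq_ge0 x : 0 <= Nq x.
Proof. rewrite /Nq; case: x => a b c d /=; nra. Qed.

Lemma key x y : u1 x * u1 y + u2 x * u2 y + u3 x * u3 y <= Nq x * Nq y.
Proof.
case: x => a b c d; case: y => e f g h; rewrite /u1 /u2 /u3 /Nq /=.
rewrite -subr_ge0.
match goal with |- is_true (0 <= ?L) => have -> : L = 2 * ((a*g + b*h - c*e - d*f) ^+ 2 + (a*h - b*g + c*f - d*e) ^+ 2) by ring end.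
by apply: mulr_ge0 => //; apply: addr_ge0; apply: sqr_ge0.
Qed.

Lemma self x : u1 x ^+ 2 + u2 x ^+ 2 + u3 x ^+ 2 = Nq x ^+ 2.
Proof. case: x => a b c d; rewrite /u1 /u2 /u3 /Nq /=; ring. Qed.
End Helpers.
Arguments Nq {R}. Arguments u1 {R}. Arguments u2 {R}. Arguments u3 {R}.

Section Mx.
Variable R : realType.
Variable n : nat.
Notation Q := (quat R).
Notation M := 'M[Q]_(n.+1).

Definition isdiag (A : M) (d : 'I_n.+1 -> Q) := forall i j, A i j = if i == j then d i else 0.

Lemma diag_eq A B d : isdiag A d -> isdiag B d -> A = B.
Proof. by move=> hA hB; apply/matrixP => i j; rewrite hA hB. Qed.

Lemma diag_ext A d d' : (forall k, d k = d' k) -> isdiag A d -> isdiag A d'.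
Proof. by move=> h hA i j; rewrite hA; case: eqP => // ->. Qed.

Lemma diag_mull A d (B : M) i j : isdiag A d -> (A *m B) i j = d i * B i j.
Proof.
move=> hA; rewrite mxE (bigD1 i) //= hA eqxx big1 ?addr0 // => k nk.
by rewrite hA eq_sym (negbTE nk) mul0r.
Qed.

Lemma diag_mulr A d (B : M) i j : isdiag A d -> (B *m A) i j = B i j * d j.
Proof.
move=> hA; rewrite mxE (bigD1 j) //= hA eqxx big1 ?addr0 // => k nk.
by rewrite hA (negbTE nk) mulr0.
Qed.

Lemma mul_diag A B d1 d2 : isdiag A d1 -> isdiag B d2 -> isdiag (A *m B) (fun k => d1 k * d2 k).
Proof.
move=> hA hB i j; rewrite (diag_mull A d1 B i j hA) hB.
by case: eqP => [->|]; rewrite ?mulr0.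
Qed.

Lemma add_diag A B d1 d2 : isdiag A d1 -> isdiag B d2 -> isdiag (A + B) (fun k => d1 k + d2 k).
Proof. by move=> hA hB i j; rewrite mxE hA hB; case: eqP; rewrite ?addr0. Qed.

Lemma sub_diag A B d1 d2 : isdiag A d1 -> isdiag B d2 -> isdiag (A - B) (fun k => d1 k - d2 k).
Proof. by move=> hA hB i j; rewrite !mxE hA hB; case: eqP; rewrite ?subr0. Qed.

Lemma one_diag : isdiag 1%:M (fun _ => 1).
Proof. by move=> i j; rewrite mxE; case: eqP. Qed.

Lemma J_diag : isdiag (Inm1 R n) (fun k => if k == ord_max then -1 else 1).
Proof. by move=> i j; rewrite mxE. Qed.

Definition dv (a b c : Q) (k : 'I_n.+1) : Q :=
  if (k < n - 2)%N then 1 else [:: a; b; c]`_(k - (n - 2)).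

Lemma blk3_diag a b c : (2 <= n)%N -> isdiag (blk3 n (diag3 a b c)) (dv a b c).
Proof.
move=> hn i j; rewrite !mxE /dv.
case: ifP => h.
  have [eij|nij] := eqVneq i j => //.
  by subst j; rewrite orbb in h; rewrite h.
move/negbT: h; rewrite negb_or => /andP [hi hj].
rewrite (negbTE hi).
have hi3 : (i - (n - 2) < 3)%N by have := ltn_ord i; lia.
have hj3 : (j - (n - 2) < 3)%N by have := ltn_ord j; lia.
have -> : (@inord 2 (i - (n - 2)) == @inord 2 (j - (n - 2))) = (i == j).
  apply/eqP/eqP => [|-> //].
  move/(congr1 val); rewrite /= !inordK // => e.
  apply/val_inj => /=; lia.
by case: eqP => // _; rewrite inordK.
Qed.

Lemma T_diag (g ginv A : M) d : isdiag A d ->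
  \tr (g *m A *m ginv) = \sum_p \sum_q g p q * d q * ginv q p.
Proof.
move=> hA; apply: eq_bigr => p _; rewrite mxE; apply: eq_bigr => q _.
by rewrite (diag_mulr A d g p q hA).
Qed.
End Mx.
Arguments isdiag {R n}. Arguments diag_eq {R n}. Arguments diag_ext {R n}.
Arguments diag_mull {R n}. Arguments diag_mulr {R n}. Arguments mul_diag {R n A B d1 d2}.
Arguments add_diag {R n A B d1 d2}. Arguments sub_diag {R n A B d1 d2}. Arguments one_diag {R n}.
Arguments J_diag {R n}. Arguments dv {R} n. Arguments blk3_diag {R n}. Arguments T_diag {R n}.
Lemma trN (R : realType) (n : nat) (A : 'M[quat R]_n) : \tr (- A) = - \tr A.
Proof. exact: linearN. Qed.

Section Terms.
Variable R : realType.
Let w : quat R := Quat 0 4 0 0.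
Lemma tq1a (x : quat R) : q1 (x * w * (-1 * (qconj x * -1))) = 4 * u1 x.
Proof. case: x => a b c d; rewrite /u1 /=; ring. Qed.
Lemma tq2a (x : quat R) : q2 (x * w * (-1 * (qconj x * -1))) = 4 * u2 x.
Proof. case: x => a b c d; rewrite /u2 /=; ring. Qed.
Lemma tq3a (x : quat R) : q3 (x * w * (-1 * (qconj x * -1))) = 4 * u3 x.
Proof. case: x => a b c d; rewrite /u3 /=; ring. Qed.
Lemma tq1b (x : quat R) : q1 (x * w * (-1 * (qconj x * 1))) = - 4 * u1 x.
Proof. case: x => a b c d; rewrite /u1 /=; ring. Qed.
Lemma tq2b (x : quat R) : q2 (x * w * (-1 * (qconj x * 1))) = - 4 * u2 x.
Proof. case: x => a b c d; rewrite /u2 /=; ring. Qed.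
Lemma tq3b (x : quat R) : q3 (x * w * (-1 * (qconj x * 1))) = - 4 * u3 x.
Proof. case: x => a b c d; rewrite /u3 /=; ring. Qed.
Lemma tn_a (x : quat R) : q0 (qconj x * -1 * x) = - Nq x.
Proof. case: x => a b c d; rewrite /Nq /=; ring. Qed.
Lemma tn_b (x : quat R) : q0 (qconj x * 1 * x) = Nq x.
Proof. case: x => a b c d; rewrite /Nq /=; ring. Qed.
Lemma final_arith (a s : R) : 0 <= a -> 0 <= s -> s - a = -1 -> a ^+ 2 <= s * a -> False.
Proof. move=> ha hs e h; rewrite expr2 in h; nra. Qed.
End Terms.

Theorem proposition4p12 (R : realType) (n : nat) (hn : (2 <= n)%N)
  (G : 'M[quat R]_(n.+1) -> Prop)
  (G_Sp : forall A, G A -> Sp_n1 A)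
  (G_1 : G 1%:M)
  (G_mul : forall A B, G A -> G B -> G (A *m B))
  (G_inv : forall A, G A -> exists B, G B /\ A *m B = 1%:M /\ B *m A = 1%:M)
  (G_c1 : G (blk3 n (c1 R)))
  (G_c2 : G (blk3 n (c2 R)))
  (G_c3 : G (blk3 n (c3 R))) :
  forall g ginv : 'M[quat R]_(n.+1),
    Sp_n1 g -> g *m ginv = 1%:M -> ginv *m g = 1%:M ->
    ~ (forall A, G A -> exists r : R, \tr (g *m A *m ginv) = qofR r).
Proof.
move=> g ginv hSp hgg hgg' H.
set P1 := blk3 n (c1 R); set P2 := blk3 n (c2 R); set P3 := blk3 n (c3 R).
have hP1 : isdiag P1 (dv n 1 (qi R) (- qi R)) by exact: blk3_diag.
have hP2 : isdiag P2 (dv n (qi R) 1 (- qi R)) by exact: blk3_diag.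
have hP3 : isdiag P3 (dv n (qi R) (- qi R) 1) by exact: blk3_diag.
set Q := P1 *m P2.
have GQ : G Q by exact: G_mul.
have GQ3 : G (Q *m Q *m Q) := G_mul _ _ (G_mul _ _ GQ GQ) GQ.
have GP13 : G (P1 *m P1 *m P1) := G_mul _ _ (G_mul _ _ G_c1 G_c1) G_c1.
have GP33 : G (P3 *m P3 *m P3) := G_mul _ _ (G_mul _ _ G_c3 G_c3) G_c3.
have hQ := mul_diag hP1 hP2.
have hQ3 := mul_diag (mul_diag hQ hQ) hQ.
have hP13 := mul_diag (mul_diag hP1 hP1) hP1.
have hP33 := mul_diag (mul_diag hP3 hP3) hP3.
set E := Q - Q *m Q *m Q - P3 + P3 *m P3 *m P3 - P1 - P1 + P1 *m P1 *m P1 + P1 *m P1 *m P1.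
have hE0 := add_diag (add_diag (sub_diag (sub_diag (add_diag (sub_diag (sub_diag hQ hQ3) hP3) hP33) hP1) hP1) hP13) hP13.
pose e0 (k : 'I_n.+1) : quat R := if k == ord_max then Quat 0 4 0 0 else 0.
have hE : isdiag E e0.
  apply: diag_ext hE0 => k /=; rewrite /dv /e0.
  case: (ltnP k (n - 2)) => hk.
    have -> : (k == ord_max) = false by apply/negbTE; apply/eqP => /(congr1 val) /=; lia.
    by apply: qext => /=; ring.
  have hm : (k - (n - 2) < 3)%N by have := ltn_ord k; lia.
  have -> : (k == ord_max) = (k - (n - 2) == 2)%N.
    apply/eqP/eqP => [-> /=| h]; first lia.
    by apply/val_inj => /=; have := ltn_ord k; lia.
  move: hm; case: (k - (n - 2))%N => [|[|[|m]]] //= _; apply: qext => /=; ring.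
have [rQ hrQ] := H _ GQ.
have [rQ3 hrQ3] := H _ GQ3.
have [r1 hr1] := H _ G_c1.
have [r3 hr3] := H _ G_c3.
have [r13 hr13] := H _ GP13.
have [r33 hr33] := H _ GP33.
have htE : \tr (g *m E *m ginv) = qofR rQ - qofR rQ3 - qofR r3 + qofR r33 - qofR r1 - qofR r1 + qofR r13 + qofR r13.
  rewrite /E !(mulmxDr, mulmxBr, mulmxDl, mulmxBl, linearD, linearB) /=.
  by rewrite !mulmxN !mulNmx !trN hrQ hrQ3 hr1 hr3 hr13 hr33.
rewrite (T_diag g ginv E e0 hE) in htE.
have hin : forall p : 'I_n.+1, \sum_q g p q * e0 q * ginv q p = g p ord_max * Quat 0 4 0 0 * ginv ord_max p.
  move=> p; rewrite (bigD1 ord_max) //= /e0 eqxx big1 ?addr0 // => q nq.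
  by rewrite (negbTE nq) mulr0 mul0r.
rewrite (eq_bigr _ (fun p _ => hin p)) in htE.
set J := Inm1 R n.
have hSp' : qadj g *m J *m g = J := hSp.
have JJ : J *m J = 1%:M.
  apply: (diag_eq _ _ (fun _ => 1)); last exact: one_diag.
  apply: diag_ext (mul_diag J_diag J_diag) => k.
  by case: (k == ord_max); rewrite ?mulrNN mulr1.
have h1 : J *m ginv = qadj g *m J by rewrite -{1}hSp' -mulmxA hgg mulmx1.
have hginv : ginv = J *m (qadj g *m J) by rewrite -h1 mulmxA JJ mul1mx.
have hgi : forall p, ginv ord_max p = -1 * (qconj (g p ord_max) * (if p == ord_max then -1 else 1)).
  move=> p; rewrite hginv (diag_mull J _ _ _ _ J_diag) (diag_mulr J _ _ _ _ J_diag) eqxx.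
  by rewrite /qadj !mxE.
rewrite (eq_bigr _ (fun p _ => congr1 _ (hgi p))) in htE.
rewrite (bigD1 ord_max) //= eqxx in htE.
have hsp : (qadj g *m J *m g) ord_max ord_max = J ord_max ord_max by rewrite hSp'.
rewrite /= mxE in hsp.
have hrow : forall j, (qadj g *m J) ord_max j = qconj (g j ord_max) * (if j == ord_max then -1 else 1).
  by move=> j; rewrite (diag_mulr J _ (qadj g) ord_max j J_diag) /qadj !mxE.
rewrite (eq_bigr _ (fun j _ => congr1 (fun x => x * g j ord_max) (hrow j))) in hsp.
rewrite (bigD1 ord_max) //= eqxx /J mxE eqxx in hsp.
have q0D : forall x y : quat R, q0 (x + y) = q0 x + q0 y by [].
have q1D : forall x y : quat R, q1 (x + y) = q1 x + q1 y by [].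
have q2D : forall x y : quat R, q2 (x + y) = q2 x + q2 y by [].
have q3D : forall x y : quat R, q3 (x + y) = q3 x + q3 y by [].
set y := g ord_max ord_max.
have FN : \sum_(p < n.+1 | p != ord_max) Nq (g p ord_max) - Nq y = -1.
  move: (congr1 (@q0 R) hsp); rewrite q0D q0_sum tn_a.
  rewrite (eq_bigr (fun p => Nq (g p ord_max))) => [|p hp]; last by rewrite (negbTE hp) tn_b.
  rewrite [X in _ = X]/= => e; rewrite -/y in e; lra.
have F1 : \sum_(p < n.+1 | p != ord_max) u1 (g p ord_max) = u1 y.
  move: (congr1 (@q1 R) htE); rewrite [in X in X = _]q1D q1_sum tq1a.
  rewrite (eq_bigr (fun p => -4 * u1 (g p ord_max))) => [|p hp]; last by rewrite (negbTE hp) tq1b.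
  rewrite -mulr_sumr [X in _ = X]/= => e; rewrite -/y in e; lra.
have F2 : \sum_(p < n.+1 | p != ord_max) u2 (g p ord_max) = u2 y.
  move: (congr1 (@q2 R) htE); rewrite [in X in X = _]q2D q2_sum tq2a.
  rewrite (eq_bigr (fun p => -4 * u2 (g p ord_max))) => [|p hp]; last by rewrite (negbTE hp) tq2b.
  rewrite -mulr_sumr [X in _ = X]/= => e; rewrite -/y in e; lra.
have F3 : \sum_(p < n.+1 | p != ord_max) u3 (g p ord_max) = u3 y.
  move: (congr1 (@q3 R) htE); rewrite [in X in X = _]q3D q3_sum tq3a.
  rewrite (eq_bigr (fun p => -4 * u3 (g p ord_max))) => [|p hp]; last by rewrite (negbTE hp) tq3b.
  rewrite -mulr_sumr [X in _ = X]/= => e; rewrite -/y in e; lra.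
have S : Nq y ^+ 2 <= (\sum_(p < n.+1 | p != ord_max) Nq (g p ord_max)) * Nq y.
  rewrite -self !expr2 -{1}F1 -{1}F2 -{1}F3 !big_distrl -!big_split /=.
  by apply: ler_sum => p _; apply: key.
have hy : 0 <= Nq y by apply: Nq_ge0.
have hs : 0 <= \sum_(p < n.+1 | p != ord_max) Nq (g p ord_max) by apply: sumr_ge0 => p _; apply: Nq_ge0.
move: S hy hs FN.
set s := \sum_(p < n.+1 | p != ord_max) Nq (g p ord_max).
move=> S hy hs FN; exact: (@final_arith R _ _ hy hs FN S).
Qed.
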